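(* Let $M$ be a monoid defined by a positive homogeneous presentation on a generator set $L$. Then: (i) every fundamental element $\Delta$ of $M$ is quasi-central, and the permutation of $L/\!\sim$ associated with $\Delta$ as a fundamental element coincides with the one associated with it as a quasi-central element; (ii) if $\Delta$ is fundamental and $\Delta'$ is quasi-central, then $\Delta\Delta'$ and $\Delta'\Delta$ are fundamental, with associated permutations $\sigma_{\Delta\Delta'}=\sigma_{\Delta'}\circ\sigma_\Delta$ and $\sigma_{\Delta'\Delta}=\sigma_\Delta\circ\sigma_{\Delta'}$, and one can take $(\Delta\Delta')_x=\Delta_x\Delta'$ and $(\Delta'\Delta)_x=\Delta'\Delta_{\sigma_{\Delta'}(x)}$ for $x\in L/\!\sim$. In particular $\mathcal{F}(M)\mathcal{QZ}(M)=\mathcal{QZ}(M)\mathcal{F}(M)=\mathcal{F}(M)$.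
   Context: A positive homogeneous presentation consists of generators $L$ and relations $R=S$ with $R,S$ positive words in $L$ of equal length; $M$ is the quotient of the free monoid $L^*$ by the congruence generated by these relations. $L/\!\sim$ is the quotient of $L$ by the equivalence generated by relations equating two letters; its elements are regarded as elements of $M$. $\Delta\in M$ is quasi-central if there is a permutation $\sigma_\Delta$ of $L/\!\sim$ with $x\Delta=\Delta\sigma_\Delta(x)$ for all $x\in L/\!\sim$; $\mathcal{QZ}(M)$ is the set of quasi-central elements. $\Delta\in M$ is fundamental if there is a permutation $\sigma_\Delta$ of $L/\!\sim$ such that for each $x\in L/\!\sim$ there is $\Delta_x\in M$ with $\Delta=x\Delta_x=\Delta_x\sigma_\Delta(x)$; $\mathcal{F}(M)$ is the set of fundamental elements. *)

(* Defs.v *)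
(* A positive homogeneous presentation <L | R = S> is given by a
   type of generators L and a relation-set rel : list L -> list L -> Prop
   (rel r s means "r = s" is a defining relation).  The monoid M = L^*/cong
   is represented by words modulo the congruence [cong]. *)
From Stdlib Require Import List.
Import ListNotations.
Set Implicit Arguments.

Section Pres.
Variables (L : Type) (rel : list L -> list L -> Prop).

Inductive cong : list L -> list L -> Prop :=
| cong_step : forall u v r s, rel r s -> cong (u ++ r ++ v) (u ++ s ++ v)
| cong_refl : forall w, cong w w
| cong_sym : forall w w', cong w w' -> cong w' w
| cong_trans : forall w1 w2 w3, cong w1 w2 -> cong w2 w3 -> cong w1 w3.

Inductive lsim : L -> L -> Prop :=
| lsim_base : forall a b, rel [a] [b] -> lsim a b
| lsim_refl : forall a, lsim a a
| lsim_sym : forall a b, lsim a b -> lsim b a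
| lsim_trans : forall a b c, lsim a b -> lsim b c -> lsim a c.

(* sigma : L -> L induces a permutation of L/~ *)
Definition perm_cls (sigma : L -> L) : Prop :=
  (forall x y, lsim x y -> lsim (sigma x) (sigma y)) /\
  (forall x y, lsim (sigma x) (sigma y) -> lsim x y) /\
  (forall y, exists x, lsim (sigma x) y).

Definition quasicentral_with (d : list L) (sigma : L -> L) : Prop :=
  perm_cls sigma /\ forall x, cong (x :: d) (d ++ [sigma x]).

Definition quasicentral (d : list L) : Prop :=
  exists sigma, quasicentral_with d sigma.

Definition fund_witness (d : list L) (sigma : L -> L) (x : L) (dx : list L) : Prop :=
  cong d (x :: dx) /\ cong d (dx ++ [sigma x]).

Definition fundamental_with (d : list L) (sigma : L -> L) : Prop :=
  perm_cls sigma /\ forall x, exists dx, fund_witness d sigma x dx.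

Definition fundamental (d : list L) : Prop :=
  exists sigma, fundamental_with d sigma.

Definition homogeneous : Prop :=
  forall r s, rel r s -> length r = length s.

End Pres.

(* Main.v *)
Require Import Defs.
From Stdlib Require Import List.
Import ListNotations.


Section H.
Variables (L : Type) (rel : list L -> list L -> Prop).

Lemma cong_app_l c a b : cong rel a b -> cong rel (c ++ a) (c ++ b).
Proof.
  induction 1.
  - rewrite !app_assoc. rewrite <- !(app_assoc (c ++ u)). now constructor.
  - apply cong_refl.
  - now apply cong_sym.
  - eapply cong_trans; eauto.
Qed.

Lemma cong_app_r c a b : cong rel a b -> cong rel (a ++ c) (b ++ c).
Proof.
  induction 1.
  - rewrite <- !app_assoc. now constructor.
  - apply cong_refl.
  - now apply cong_sym.
  - eapply cong_trans; eauto.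
Qed.

Lemma perm_comp f g : perm_cls rel f -> perm_cls rel g -> perm_cls rel (fun x => g (f x)).
Proof.
  intros [f1 [f2 f3]] [g1 [g2 g3]]. split; [|split]; intros.
  - auto.
  - auto.
  - destruct (g3 y) as [z Hz]. destruct (f3 z) as [w Hw]. exists w.
    eapply lsim_trans; [apply g1; eassumption|]. exact Hz.
Qed.

Lemma fund_cong w v : cong rel w v -> fundamental rel v -> fundamental rel w.
Proof.
  intros H [s [Hp Hw]]. exists s. split; auto. intros x. destruct (Hw x) as [dx [A B]].
  exists dx. split; eapply cong_trans; eauto.
Qed.
End H.

Theorem fact3 (L : Type) (rel : list L -> list L -> Prop)
  (hom : homogeneous rel) :
  (* (i) *)
  (forall (d : list L) (sigma : L -> L),
      fundamental_with rel d sigma -> quasicentral_with rel d sigma) /\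
  (* (ii) *)
  (forall (d d' : list L) (sigma sigma' : L -> L),
      fundamental_with rel d sigma -> quasicentral_with rel d' sigma' ->
      fundamental_with rel (d ++ d') (fun x => sigma' (sigma x)) /\
      fundamental_with rel (d' ++ d) (fun x => sigma (sigma' x)) /\
      (forall x dx, fund_witness rel d sigma x dx ->
         fund_witness rel (d ++ d') (fun y => sigma' (sigma y)) x (dx ++ d')) /\
      (forall x dy, fund_witness rel d sigma (sigma' x) dy ->
         fund_witness rel (d' ++ d) (fun y => sigma (sigma' y)) x (d' ++ dy))) /\
  (* F(M) QZ(M) = QZ(M) F(M) = F(M), as subsets of M *)
  (forall w : list L,
      fundamental rel w <->
      exists d d', fundamental rel d /\ quasicentral rel d' /\ cong rel w (d ++ d')) /\
  (forall w : list L,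
      fundamental rel w <->
      exists d' d, quasicentral rel d' /\ fundamental rel d /\ cong rel w (d' ++ d)).
Proof.
  assert (Hi : forall (d : list L) (sigma : L -> L),
      fundamental_with rel d sigma -> quasicentral_with rel d sigma).
  { intros d s [Hp Hw]. split; auto. intros x. destruct (Hw x) as [dx [A B]].
    apply cong_trans with (x :: dx ++ [s x]).
    - apply (@cong_app_l _ _ [x]) in B. exact B.
    - apply cong_sym. apply (@cong_app_r _ _ [s x]) in A. exact A. }
  assert (Hii : forall (d d' : list L) (sigma sigma' : L -> L),
      fundamental_with rel d sigma -> quasicentral_with rel d' sigma' ->
      fundamental_with rel (d ++ d') (fun x => sigma' (sigma x)) /\
      fundamental_with rel (d' ++ d) (fun x => sigma (sigma' x)) /\
      (forall x dx, fund_witness rel d sigma x dx ->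
         fund_witness rel (d ++ d') (fun y => sigma' (sigma y)) x (dx ++ d')) /\
      (forall x dy, fund_witness rel d sigma (sigma' x) dy ->
         fund_witness rel (d' ++ d) (fun y => sigma (sigma' y)) x (d' ++ dy))).
  { intros d d' s s' [Hp Hw] [Hq Hc].
    assert (W1 : forall x dx, fund_witness rel d s x dx ->
         fund_witness rel (d ++ d') (fun y => s' (s y)) x (dx ++ d')).
    { intros x dx [A B]. split.
      - apply (@cong_app_r _ _ d') in A. exact A.
      - apply cong_trans with ((dx ++ [s x]) ++ d'). apply cong_app_r; auto.
        rewrite <- !app_assoc. apply cong_app_l. simpl. apply Hc. }
    assert (W2 : forall x dy, fund_witness rel d s (s' x) dy ->
         fund_witness rel (d' ++ d) (fun y => s (s' y)) x (d' ++ dy)).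
    { intros x dy [A B]. split.
      - apply cong_trans with (d' ++ (s' x :: dy)). apply cong_app_l; auto.
        change (s' x :: dy) with ([s' x] ++ dy). rewrite app_assoc.
        change (x :: d' ++ dy) with ((x :: d') ++ dy). apply cong_app_r.
        apply cong_sym; apply Hc.
      - rewrite <- app_assoc. apply cong_app_l. exact B. }
    split; [|split; [|split]]; auto.
    - split. apply perm_comp; auto. intros x. destruct (Hw x) as [dx H]. eauto.
    - split. apply perm_comp; auto. intros x. destruct (Hw (s' x)) as [dx H]. eauto. }
  assert (Hid : quasicentral rel []).
  { exists (fun x => x). split.
    - split; [|split]; auto. intros y; exists y; apply lsim_refl.
    - intros x. apply cong_refl. }
  split; [exact Hi|split; [exact Hii|split]].
  - intros w. split.
    + intros Hf. exists w, []. split; auto. split; auto. rewrite app_nil_r. apply cong_refl.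
    + intros [d [d' [[s Hf] [[s' Hq] Hc]]]]. apply fund_cong with (d ++ d'); auto.
      exists (fun x => s' (s x)). apply (Hii d d' s s' Hf Hq).
  - intros w. split.
    + intros Hf. exists [], w. split; auto. split; auto. apply cong_refl.
    + intros [d' [d [[s' Hq] [[s Hf] Hc]]]]. apply fund_cong with (d' ++ d); auto.
      exists (fun x => s (s' x)). apply (Hii d d' s s' Hf Hq).
Qed.
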